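(* Let $0<k<n$ and $d$ be integers, and let $A_c=(\alpha_c,n_1,d_1,k_1,n_2,d_2,k_2)$ be an allowable critical data set for type $(n,d,k)$ with $k_2=0$. Then $C_{12}>0$ and $C_{21}>0$.
   Context: Write $d=na-t$ with integers $a,t$, $0\le t<n$, and $ka=l(n-k)+t+m$ with integers $l,m$, $0\le m<n-k$. A critical data set for type $(n,d,k)$ is a tuple $A_c=(\alpha_c,n_1,d_1,k_1,n_2,d_2,k_2)$ with integers $n_i\ge1$, $k_i\ge0$, $d_i$ such that $n_1+n_2=n$, $d_1+d_2=d$, $k_1+k_2=k$, $\frac{d_2}{n_2}>\frac{d_1}{n_1}$, $\frac{k_1}{n_1}>\frac{k_2}{n_2}$, and $\alpha_c=\frac{d_2n_1-d_1n_2}{n_2k_1-n_1k_2}$. It is allowable if moreover $\frac tk<\alpha_c<\frac{ln+t}{k}$, $d\ge\frac1k(n^2-1)-(n-k)$, $d_1\ge\frac1{k_1}(n_1^2-1)-(n_1-k_1)$, and either ($k_2=0$ and $n_2=1$) or ($k_2\ge1$ and $d_2\ge\frac1{k_2}(n_2^2-1)-(n_2-k_2)$). Define $C_{12}=-n_1n_2-d_2n_1+d_1n_2+k_1(d_2+n_2-k_2)$ and $C_{21}=-n_1n_2+d_2n_1-d_1n_2+k_2(d_1+n_1-k_1)$. *)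

(* Defs.v *)
From mathcomp Require Import all_boot all_order all_algebra.
Set Implicit Arguments. Unset Strict Implicit. Unset Printing Implicit Defensive.
Import Order.TTheory GRing.Theory Num.Theory.
Local Open Scope ring_scope.

Definition toQ (z : int) : rat := z%:~R.

Definition ad_decomp (n d a t : int) : Prop :=
  d = n * a - t /\ 0 <= t /\ t < n.

Definition lm_decomp (n k a t l m : int) : Prop :=
  k * a = l * (n - k) + t + m /\ 0 <= m /\ m < n - k.

Definition critical_data_set (n d k : int) (alpha : rat)
    (n1 d1 k1 n2 d2 k2 : int) : Prop :=
  [/\ 1 <= n1, 1 <= n2, 0 <= k1 & 0 <= k2] /\
  [/\ n1 + n2 = n, d1 + d2 = d & k1 + k2 = k] /\
  [/\ toQ d2 / toQ n2 > toQ d1 / toQ n1,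
       toQ k1 / toQ n1 > toQ k2 / toQ n2
     & alpha = toQ (d2 * n1 - d1 * n2) / toQ (n2 * k1 - n1 * k2)].

Definition deg_bound (n d k : int) : Prop :=
  toQ d >= (toQ (n ^+ 2 - 1)) / toQ k - toQ (n - k).

(* allowable critical data set; t, l are the integers attached to (n,d,k) *)
Definition allowable (n d k t l : int) (alpha : rat)
    (n1 d1 k1 n2 d2 k2 : int) : Prop :=
  critical_data_set n d k alpha n1 d1 k1 n2 d2 k2 /\
  [/\ toQ t / toQ k < alpha,
      alpha < toQ (l * n + t) / toQ k,
      deg_bound n d k,
      deg_bound n1 d1 k1
    & (k2 = 0 /\ n2 = 1) \/ (1 <= k2 /\ deg_bound n2 d2 k2)].

Definition C12 (n1 d1 k1 n2 d2 k2 : int) : int :=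
  - (n1 * n2) - d2 * n1 + d1 * n2 + k1 * (d2 + n2 - k2).

Definition C21 (n1 d1 k1 n2 d2 k2 : int) : int :=
  - (n1 * n2) + d2 * n1 - d1 * n2 + k2 * (d1 + n1 - k1).

(* Main.v *)
Require Import Defs.
From mathcomp Require Import all_boot all_order all_algebra.
From mathcomp Require Import zify ring.
Import Order.TTheory GRing.Theory Num.Theory.
Local Open Scope ring_scope.

Lemma divk_lt (k x y : int) : 0 < k -> toQ x / toQ k < toQ y / toQ k -> x < y.
Proof.
move=> hk; rewrite ltr_pM2r; last by rewrite invr_gt0 /toQ ltr0z.
by rewrite /toQ ltr_int.
Qed.

Theorem proposition5p1 (n d k a t l m : int) (alpha : rat)
    (n1 d1 k1 n2 d2 k2 : int) :
  0 < k -> k < n ->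
  ad_decomp n d a t ->
  lm_decomp n k a t l m ->
  allowable n d k t l alpha n1 d1 k1 n2 d2 k2 ->
  k2 = 0 ->
  0 < C12 n1 d1 k1 n2 d2 k2 /\ 0 < C21 n1 d1 k1 n2 d2 k2.
Proof.
move=> hk hkn [hd [ht0 htn]] [hka [hm0 hmn]].
move=> [[[hn1 hn2 hk1 hk2'] [[en ed ek] [_ _ ealpha]]] [h1 h2 _ _ hor]] ek2.
have en2 : n2 = 1 by case: hor => [[_ ->]|[h _]] //; move: h; rewrite ek2.
subst k2 n2.
have ek1 : k1 = k by rewrite -ek addr0.
subst k1.
have eden : 1 * k - n1 * 0 = k by rewrite mul1r mulr0 subr0.
rewrite ealpha eden in h1 h2.
move/(@divk_lt k _ _ hk): h1 => h1.
move/(@divk_lt k _ _ hk): h2 => h2.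
rewrite /C12 /C21.
set e := d2 - a.
have hX : d2 * n1 - d1 * 1 = n * e + t.
  have -> : d1 = n * a - t - d2 by lia.
  have -> : n1 = n - 1 by lia.
  rewrite /e; ring.
rewrite hX in h1 h2.
have hn : 0 < n by lia.
have he1 : 0 < e.
  have : 0 < n * e by lia.
  by rewrite pmulr_rgt0.
have he2 : e < l.
  have : n * e < n * l by rewrite mulrC; lia.
  by rewrite ltr_pM2l.
have hp : n - k <= (l - e) * (n - k).
  rewrite ler_peMl ?subr_gt0 //; lia.
have ed1 : d1 = n * a - t - d2 by lia.
have en1 : n1 = n - 1 by lia.
rewrite ed1 en1.
split.
  have -> : - ((n - 1) * 1) - d2 * (n - 1) + (n * a - t - d2) * 1 + k * (d2 + 1 - 0)
    = 1 + m + ((l - e) * (n - k) - (n - k)) + (k * a - (l * (n - k) + t + m)).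
    rewrite /e; ring.
  rewrite hka subrr addr0; lia.
have -> : - ((n - 1) * 1) + d2 * (n - 1) - (n * a - t - d2) * 1 + 0 * (n * a - t - d2 + (n - 1) - k)
  = n * e + t - (n - 1) by rewrite /e; ring.
have : n <= n * e by rewrite ler_peMr // ?ltW //; lia.
lia.
Qed.
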